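(* Let $\ell:K(H\times\mathrm{Id})\to HM$ be an abstract GSOS rule with $\ell$-interpretation $b:KC\to C$, and let $k=c^{-1}\cdot Hb^\sharp:HMC\to C$. Then $(C,k)$ is a completely iterative algebra for the functor $HM$.
   Context: Let $\mathcal A$ be a category with binary products and coproducts, let $H:\mathcal A\to\mathcal A$ be a functor with a terminal coalgebra $c:C\to HC$ (so $c$ is an isomorphism by Lambek's lemma), and let $K:\mathcal A\to\mathcal A$ be a functor such that every object $X$ has a free $K$-algebra $\varphi_X:KMX\to MX$ with universal morphism $\eta_X:X\to MX$. Then $(M,\eta,\mu)$ is the free monad on $K$, and $\kappa=\varphi\cdot K\eta:K\to M$. For a $K$-algebra $a:KA\to A$ let $a^\sharp:MA\to A$ be the unique $K$-algebra homomorphism with $a^\sharp\cdot\eta_A=\mathrm{id}_A$; it is an Eilenberg–Moore algebra for $M$. An abstract GSOS rule is a natural transformation $\ell:K(H\times\mathrm{Id})\to HM$; its $\ell$-interpretation is the unique morphism $b:KC\to C$ with $c\cdot b=Hb^\sharp\cdot\ell_C\cdot K\langle c,\mathrm{id}_C\rangle$. For an endofunctor $G$, a flat equation morphism in an object $A$ is a morphism $e:X\to GX+A$; a $G$-algebra $a:GA\to A$ is a completely iterative algebra (cia) if every flat equation morphism $e:X\to GX+A$ has a unique solution, i.e. a unique $e^\dagger:X\to A$ with $e^\dagger=[a,\mathrm{id}_A]\cdot(Ge^\dagger+\mathrm{id}_A)\cdot e$. *)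

(* Defs.v *)
From Stdlib Require Import Classical FunctionalExtensionality.

Set Implicit Arguments.
Unset Strict Implicit.

Record Category := {
  Obj :> Type;
  Hom : Obj -> Obj -> Type;
  idm : forall A, Hom A A;
  comp : forall A B C, Hom B C -> Hom A B -> Hom A C;
  comp_id_l : forall A B (f : Hom A B), comp (idm B) f = f;
  comp_id_r : forall A B (f : Hom A B), comp f (idm A) = f;
  comp_assoc : forall A B C D (h : Hom C D) (g : Hom B C) (f : Hom A B),
      comp h (comp g f) = comp (comp h g) f
}.
Arguments Hom {c} _ _.
Arguments idm {c} _.
Arguments comp {c} {A B C} _ _.

Notation "g ∘ f" := (comp g f) (at level 40, left associativity).

Record Functor (C : Category) := {
  fobj :> C -> C;
  fmap : forall A B, Hom A B -> Hom (fobj A) (fobj B);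
  fmap_id : forall A, fmap (idm A) = idm (fobj A);
  fmap_comp : forall A B D (g : Hom B D) (f : Hom A B),
      fmap (g ∘ f) = fmap g ∘ fmap f
}.
Arguments fmap {C} _ {A B} _.

Record HasProducts (C : Category) := {
  prod : C -> C -> C;
  pi1 : forall A B, Hom (prod A B) A;
  pi2 : forall A B, Hom (prod A B) B;
  pair : forall X A B, Hom X A -> Hom X B -> Hom X (prod A B);
  pi1_pair : forall X A B (f : Hom X A) (g : Hom X B), pi1 A B ∘ pair f g = f;
  pi2_pair : forall X A B (f : Hom X A) (g : Hom X B), pi2 A B ∘ pair f g = g;
  pair_unique : forall X A B (f : Hom X A) (g : Hom X B) (h : Hom X (prod A B)),
      pi1 A B ∘ h = f -> pi2 A B ∘ h = g -> h = pair f g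
}.
Arguments prod {C} _ _ _.
Arguments pi1 {C} _ {A B}.
Arguments pi2 {C} _ {A B}.
Arguments pair {C} _ {X A B} _ _.

Record HasCoproducts (C : Category) := {
  coprod : C -> C -> C;
  inl : forall A B, Hom A (coprod A B);
  inr : forall A B, Hom B (coprod A B);
  copair : forall A B X, Hom A X -> Hom B X -> Hom (coprod A B) X;
  copair_inl : forall A B X (f : Hom A X) (g : Hom B X), copair f g ∘ inl A B = f;
  copair_inr : forall A B X (f : Hom A X) (g : Hom B X), copair f g ∘ inr A B = g;
  copair_unique : forall A B X (f : Hom A X) (g : Hom B X) (h : Hom (coprod A B) X),
      h ∘ inl A B = f -> h ∘ inr A B = g -> h = copair f g
}.
Arguments coprod {C} _ _ _.
Arguments inl {C} _ {A B}.
Arguments inr {C} _ {A B}.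
Arguments copair {C} _ {A B X} _ _.

Definition coprod_map {C : Category} (S : HasCoproducts C) {A A' B B' : C}
  (f : Hom A A') (g : Hom B B') : Hom (coprod S A B) (coprod S A' B') :=
  copair S (inl S ∘ f) (inr S ∘ g).

Record TerminalCoalgebra {C : Category} (H : Functor C) := {
  tc_carrier : C;
  tc_str : Hom tc_carrier (H tc_carrier);
  unfold : forall X, Hom X (H X) -> Hom X tc_carrier;
  unfold_hom : forall X (x : Hom X (H X)),
      tc_str ∘ unfold x = fmap H (unfold x) ∘ x;
  unfold_unique : forall X (x : Hom X (H X)) (h : Hom X tc_carrier),
      tc_str ∘ h = fmap H h ∘ x -> h = unfold x
}.
Arguments tc_carrier {C H} _.
Arguments tc_str {C H} _.

Record FreeAlgebras {C : Category} (K : Functor C) := {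
  M0 : C -> C;
  phi : forall X, Hom (K (M0 X)) (M0 X);
  eta : forall X, Hom X (M0 X);
  ext : forall X A, Hom (K A) A -> Hom X A -> Hom (M0 X) A;
  ext_eta : forall X A (a : Hom (K A) A) (f : Hom X A), ext a f ∘ eta X = f;
  ext_hom : forall X A (a : Hom (K A) A) (f : Hom X A),
      ext a f ∘ phi X = a ∘ fmap K (ext a f);
  ext_unique : forall X A (a : Hom (K A) A) (f : Hom X A) (h : Hom (M0 X) A),
      h ∘ eta X = f -> h ∘ phi X = a ∘ fmap K h -> h = ext a f
}.
Arguments M0 {C K} _ _.
Arguments phi {C K} _ _.
Arguments eta {C K} _ _.
Arguments ext {C K} _ {X A} _ _.

Definition Mmap {C : Category} {K : Functor C} (F : FreeAlgebras K) {X Y : C}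
  (f : Hom X Y) : Hom (M0 F X) (M0 F Y) :=
  ext F (phi F Y) (eta F Y ∘ f).

Definition sharp {C : Category} {K : Functor C} (F : FreeAlgebras K) {A : C}
  (a : Hom (K A) A) : Hom (M0 F A) A :=
  ext F a (idm A).

Definition HMobj {C : Category} (H K : Functor C) (F : FreeAlgebras K) (X : C) : C :=
  H (M0 F X).
Definition HMmap {C : Category} (H K : Functor C) (F : FreeAlgebras K) {X Y : C}
  (f : Hom X Y) : Hom (HMobj H F X) (HMobj H F Y) :=
  fmap H (Mmap F f).

Definition GSOS_rule {C : Category} (P : HasProducts C) (H K : Functor C)
  (F : FreeAlgebras K) (l : forall X, Hom (K (prod P (H X) X)) (H (M0 F X))) : Prop :=
  forall X Y (f : Hom X Y),
    l Y ∘ fmap K (pair P (fmap H f ∘ pi1 P) (f ∘ pi2 P))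
    = fmap H (Mmap F f) ∘ l X.

Definition is_interpretation {C : Category} (P : HasProducts C) (H K : Functor C)
  (T : TerminalCoalgebra H) (F : FreeAlgebras K)
  (l : forall X, Hom (K (prod P (H X) X)) (H (M0 F X)))
  (b : Hom (K (tc_carrier T)) (tc_carrier T)) : Prop :=
  (tc_str T ∘ b
   = fmap H (sharp F b) ∘ l (tc_carrier T) ∘ fmap K (pair P (tc_str T) (idm _)))
  /\ forall b' : Hom (K (tc_carrier T)) (tc_carrier T),
       tc_str T ∘ b'
       = fmap H (sharp F b') ∘ l (tc_carrier T) ∘ fmap K (pair P (tc_str T) (idm _))
       -> b' = b.

(* For an endofunctor G given by (Gobj, Gmap): the algebra a : G A -> A is a cia
   if every flat equation morphism e : X -> G X + A has a unique solution. *)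
Definition is_cia {C : Category} (S : HasCoproducts C)
  (Gobj : C -> C) (Gmap : forall X Y, Hom X Y -> Hom (Gobj X) (Gobj Y))
  (A : C) (a : Hom (Gobj A) A) : Prop :=
  forall (X : C) (e : Hom X (coprod S (Gobj X) A)),
    exists s : Hom X A,
      s = copair S a (idm A) ∘ coprod_map S (Gmap X A s) (idm A) ∘ e
      /\ forall t : Hom X A,
           t = copair S a (idm A) ∘ coprod_map S (Gmap X A t) (idm A) ∘ e -> t = s.

(* Main.v *)
Require Import Defs.
Set Implicit Arguments.

Lemma pair_comp {C : Category} (P : HasProducts C) {X Y A B : C}
  (f : Hom X A) (g : Hom X B) (h : Hom Y X) :
  pair P f g ∘ h = pair P (f ∘ h) (g ∘ h).
Proof.
  apply pair_unique; rewrite comp_assoc; [rewrite pi1_pair | rewrite pi2_pair]; reflexivity.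
Qed.

Lemma pair_ext {C : Category} (P : HasProducts C) {X A B : C}
  (h h' : Hom X (prod P A B)) :
  pi1 P ∘ h = pi1 P ∘ h' -> pi2 P ∘ h = pi2 P ∘ h' -> h = h'.
Proof.
  intros E1 E2. rewrite (pair_unique E1 E2). symmetry. apply pair_unique; reflexivity.
Qed.

Lemma copair_comp {C : Category} (S : HasCoproducts C) {A B X Y : C}
  (f : Hom A X) (g : Hom B X) (k : Hom X Y) :
  k ∘ copair S f g = copair S (k ∘ f) (k ∘ g).
Proof.
  apply copair_unique; rewrite <- comp_assoc; [rewrite copair_inl | rewrite copair_inr]; reflexivity.
Qed.

Lemma copair_map {C : Category} (S : HasCoproducts C) {A A' B B' X : C}
  (f : Hom A' X) (g : Hom B' X) (u : Hom A A') (v : Hom B B') :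
  copair S f g ∘ coprod_map S u v = copair S (f ∘ u) (g ∘ v).
Proof.
  unfold coprod_map. rewrite copair_comp, !comp_assoc, copair_inl, copair_inr. reflexivity.
Qed.

Lemma ext_Mmap {C : Category} {K : Functor C} (F : FreeAlgebras K) {X Y A : C}
  (a : Hom (K A) A) (f : Hom Y A) (g : Hom X Y) :
  ext F a f ∘ Mmap F g = ext F a (f ∘ g).
Proof.
  apply ext_unique.
  - unfold Mmap. rewrite <- comp_assoc, ext_eta, comp_assoc, ext_eta. reflexivity.
  - unfold Mmap. rewrite <- comp_assoc, ext_hom, comp_assoc, ext_hom.
    rewrite <- comp_assoc, <- fmap_comp. reflexivity.
Qed.

Lemma ext_id {C : Category} {K : Functor C} (F : FreeAlgebras K) (X : C) :
  ext F (phi F X) (eta F X) = idm _.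
Proof.
  symmetry. apply ext_unique.
  - apply comp_id_l.
  - rewrite comp_id_l, fmap_id, comp_id_r. reflexivity.
Qed.

Definition mu {C : Category} {K : Functor C} (F : FreeAlgebras K) (X : C)
  : Hom (M0 F (M0 F X)) (M0 F X) := sharp F (phi F X).

Lemma ext_mu {C : Category} {K : Functor C} (F : FreeAlgebras K) {X A : C}
  (a : Hom (K A) A) (f : Hom X A) :
  ext F a f ∘ mu F X = sharp F a ∘ Mmap F (ext F a f).
Proof.
  unfold sharp. rewrite ext_Mmap, comp_id_l.
  apply ext_unique.
  - unfold mu, sharp. rewrite <- comp_assoc, ext_eta, comp_id_r. reflexivity.
  - unfold mu, sharp. rewrite <- comp_assoc, ext_hom, comp_assoc, ext_hom.
    rewrite <- comp_assoc, <- fmap_comp. reflexivity.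
Qed.

Lemma Mmap_eta {C : Category} {K : Functor C} (F : FreeAlgebras K) {X Y : C} (g : Hom X Y) :
  Mmap F g ∘ eta F X = eta F Y ∘ g.
Proof. unfold Mmap. apply ext_eta. Qed.
Unset Implicit Arguments.

Definition beta {C : Category} (P : HasProducts C) (H K : Functor C) (F : FreeAlgebras K)
  (l : forall X, Hom (K (prod P (H X) X)) (H (M0 F X))) (A : C) (a : Hom (K A) A)
  : Hom (K (prod P (H A) A)) (prod P (H A) A) :=
  pair P (fmap H (sharp F a) ∘ l A) (a ∘ fmap K (pi2 P)).

Definition dprime {C : Category} (P : HasProducts C) (H K : Functor C) (F : FreeAlgebras K)
  (l : forall X, Hom (K (prod P (H X) X)) (H (M0 F X))) (W : C) (w : Hom W (H (M0 F W)))
  : Hom (M0 F W) (prod P (H (M0 F W)) (M0 F W)) :=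
  ext F (beta P H K F l _ (phi F W)) (pair P w (eta F W)).

Lemma pi2_dprime {C : Category} (P : HasProducts C) (H K : Functor C) (F : FreeAlgebras K)
  (l : forall X, Hom (K (prod P (H X) X)) (H (M0 F X))) (W : C) (w : Hom W (H (M0 F W))) :
  pi2 P ∘ dprime P H K F l W w = idm _.
Proof.
  rewrite <- (ext_id F W). apply ext_unique.
  - unfold dprime. rewrite <- comp_assoc, ext_eta, pi2_pair. reflexivity.
  - unfold dprime. rewrite <- comp_assoc, ext_hom, comp_assoc. unfold beta at 1.
    rewrite pi2_pair, <- comp_assoc, <- fmap_comp. reflexivity.
Qed.

Lemma dprime_pair {C : Category} (P : HasProducts C) (H K : Functor C) (F : FreeAlgebras K)
  (l : forall X, Hom (K (prod P (H X) X)) (H (M0 F X))) (W : C) (w : Hom W (H (M0 F W))) :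
  dprime P H K F l W w = pair P (pi1 P ∘ dprime P H K F l W w) (idm _).
Proof. apply pair_unique; [reflexivity | apply pi2_dprime]. Qed.

Lemma keyG {C : Category} (P : HasProducts C) (H K : Functor C) (F : FreeAlgebras K)
  (l : forall X, Hom (K (prod P (H X) X)) (H (M0 F X)))
  (Hl : @GSOS_rule C P H K F l)
  (A : C) (a : Hom (K A) A) (g : Hom A (H A))
  (Hbi : g ∘ a = fmap H (sharp F a) ∘ l A ∘ fmap K (pair P g (idm A)))
  (W : C) (w : Hom W (H (M0 F W))) (f : Hom W A)
  (Hf : g ∘ f = fmap H (ext F a f) ∘ w) :
  g ∘ ext F a f = fmap H (ext F a f) ∘ (pi1 P ∘ dprime P H K F l W w).
Proof.
  set (v := ext F a f).
  set (Q := pair P (fmap H v ∘ pi1 P) (v ∘ pi2 P)).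
  assert (E : pair P g (idm A) ∘ v = Q ∘ dprime P H K F l W w).
  { transitivity (ext F (beta P H K F l _ a) (pair P (g ∘ f) f)).
    - apply ext_unique.
      + unfold v. rewrite <- comp_assoc, ext_eta, pair_comp, comp_id_l. reflexivity.
      + unfold v. rewrite <- comp_assoc, ext_hom, comp_assoc, pair_comp, comp_id_l, Hbi.
        unfold beta. fold v. rewrite (fmap_comp K (pair P g (idm A)) v), comp_assoc, !pair_comp.
        f_equal; try (rewrite ?comp_assoc; reflexivity).
        rewrite <- (comp_assoc a), <- fmap_comp, pi2_pair, fmap_id, comp_id_r. reflexivity.
    - symmetry. apply ext_unique.
      + unfold dprime. rewrite <- comp_assoc, ext_eta. unfold Q.
        rewrite pair_comp, <- !comp_assoc, pi1_pair, pi2_pair.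
        unfold v. rewrite ext_eta, <- Hf. reflexivity.
      + unfold dprime at 1. rewrite <- comp_assoc, ext_hom, comp_assoc.
        rewrite (fmap_comp K Q).
        rewrite comp_assoc. f_equal.
        unfold beta, Q. rewrite !pair_comp. f_equal.
        * rewrite <- (comp_assoc (fmap H v)), pi1_pair, comp_assoc, <- fmap_comp.
          rewrite <- (comp_assoc (fmap H (sharp F a))), Hl, comp_assoc, <- fmap_comp.
          change (sharp F (phi F W)) with (mu F W). unfold v. rewrite ext_mu. reflexivity.
        * rewrite <- (comp_assoc v), pi2_pair, <- (comp_assoc a), <- fmap_comp, pi2_pair.
          rewrite fmap_comp. unfold v. rewrite !comp_assoc, ext_hom. reflexivity. }
  assert (E1 := f_equal (fun z => pi1 P ∘ z) E). simpl in E1.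
  rewrite !comp_assoc, pi1_pair in E1. unfold Q in E1. rewrite pi1_pair in E1.
  rewrite E1, comp_assoc. reflexivity.
Qed.

Lemma unfold_alg {C : Category} (P : HasProducts C) (H K : Functor C) (F : FreeAlgebras K)
  (l : forall X, Hom (K (prod P (H X) X)) (H (M0 F X)))
  (Hl : @GSOS_rule C P H K F l) (T : TerminalCoalgebra H)
  (b : Hom (K (tc_carrier T)) (tc_carrier T))
  (Hb1 : tc_str T ∘ b = fmap H (sharp F b) ∘ l (tc_carrier T) ∘ fmap K (pair P (tc_str T) (idm _)))
  (Z : C) (a : Hom (K Z) Z) (g : Hom Z (H Z))
  (Hbi : g ∘ a = fmap H (sharp F a) ∘ l Z ∘ fmap K (pair P g (idm Z))) :
  unfold T g ∘ a = b ∘ fmap K (unfold T g).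
Proof.
  pose (dZ := pi1 P ∘ dprime P H K F l Z (fmap H (eta F Z) ∘ g)).
  assert (G1 : g ∘ ext F a (idm Z) = fmap H (ext F a (idm Z)) ∘ dZ).
  { apply (keyG P H K F l Hl Z a g Hbi Z).
    rewrite comp_id_r, comp_assoc, <- fmap_comp, ext_eta, fmap_id, comp_id_l. reflexivity. }
  assert (G2 : tc_str T ∘ ext F b (unfold T g) = fmap H (ext F b (unfold T g)) ∘ dZ).
  { apply (keyG P H K F l Hl _ b _ Hb1 Z).
    rewrite comp_assoc, <- fmap_comp, ext_eta. apply unfold_hom. }
  assert (E : unfold T g ∘ ext F a (idm Z) = ext F b (unfold T g)).
  { transitivity (unfold T dZ).
    - apply unfold_unique.
      rewrite comp_assoc, unfold_hom, <- comp_assoc, G1, comp_assoc, <- fmap_comp. reflexivity.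
    - symmetry. apply unfold_unique. exact G2. }
  transitivity (unfold T g ∘ (ext F a (idm Z) ∘ phi F Z ∘ fmap K (eta F Z))).
  - f_equal. rewrite ext_hom, <- comp_assoc, <- fmap_comp, ext_eta, fmap_id, comp_id_r.
    reflexivity.
  - rewrite !comp_assoc, E, ext_hom, <- comp_assoc, <- fmap_comp, ext_eta. reflexivity.
Qed.

Lemma core {C : Category} (P : HasProducts C) (H K : Functor C) (F : FreeAlgebras K)
  (l : forall X, Hom (K (prod P (H X) X)) (H (M0 F X)))
  (Hl : @GSOS_rule C P H K F l) (T : TerminalCoalgebra H)
  (b : Hom (K (tc_carrier T)) (tc_carrier T))
  (Hb1 : tc_str T ∘ b = fmap H (sharp F b) ∘ l (tc_carrier T) ∘ fmap K (pair P (tc_str T) (idm _)))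
  (Y : C) (d : Hom Y (H (M0 F Y))) :
  exists t : Hom Y (tc_carrier T),
    tc_str T ∘ t = fmap H (ext F b t) ∘ d /\
    forall t', tc_str T ∘ t' = fmap H (ext F b t') ∘ d -> t' = t.
Proof.
  pose (dl := pi1 P ∘ dprime P H K F l Y d).
  assert (Hbi : dl ∘ phi F Y =
     fmap H (sharp F (phi F Y)) ∘ l (M0 F Y) ∘ fmap K (pair P dl (idm _))).
  { unfold dl. rewrite <- comp_assoc. unfold dprime at 1. rewrite ext_hom. fold (dprime P H K F l Y d).
    unfold beta at 1. rewrite comp_assoc, pi1_pair. rewrite <- dprime_pair. reflexivity. }
  pose proof (unfold_alg P H K F l Hl T b Hb1 _ _ _ Hbi) as HU.
  assert (Eu : unfold T dl = ext F b (unfold T dl ∘ eta F Y)).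
  { apply ext_unique; [reflexivity | exact HU]. }
  exists (unfold T dl ∘ eta F Y). split.
  - rewrite <- Eu, comp_assoc, unfold_hom, <- !comp_assoc. f_equal.
    unfold dl. rewrite <- comp_assoc. unfold dprime. rewrite ext_eta, pi1_pair. reflexivity.
  - intros t' Ht'.
    pose proof (keyG P H K F l Hl _ b _ Hb1 Y d t' Ht') as G.
    fold dl in G. apply unfold_unique in G.
    rewrite <- (ext_eta F b t'), G. reflexivity.
Qed.

Theorem mainTheorem2 (C : Category) (P : HasProducts C) (S : HasCoproducts C)
  (H K : Functor C) (T : TerminalCoalgebra H) (F : FreeAlgebras K)
  (l : forall X, Hom (K (prod P (H X) X)) (H (M0 F X)))
  (Hl : @GSOS_rule C P H K F l)
  (b : Hom (K (tc_carrier T)) (tc_carrier T))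
  (Hb : @is_interpretation C P H K T F l b)
  (cinv : Hom (H (tc_carrier T)) (tc_carrier T))
  (Hcinv1 : cinv ∘ tc_str T = idm (tc_carrier T))
  (Hcinv2 : tc_str T ∘ cinv = idm (H (tc_carrier T))) :
  @is_cia C S (HMobj H F) (fun X Y f => HMmap H F f) (tc_carrier T)
    (cinv ∘ fmap H (sharp F b)).
Proof.
  unfold is_cia. intros X e. unfold HMobj in e.
  pose (d := copair S (copair S (fmap H (Mmap F (@inl C S X (tc_carrier T))))
                 (fmap H (eta F (coprod S X (tc_carrier T)) ∘ @inr C S X (tc_carrier T)) ∘ (tc_str T)) ∘ e)
               (fmap H (eta F (coprod S X (tc_carrier T)) ∘ @inr C S X (tc_carrier T)) ∘ (tc_str T)) : Hom (coprod S X (tc_carrier T)) (H (M0 F (coprod S X (tc_carrier T))))).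
  assert (R : forall s : Hom X (tc_carrier T),
     copair S (cinv ∘ fmap H (sharp F b)) (idm (tc_carrier T)) ∘ coprod_map S (HMmap H F s) (idm (tc_carrier T)) ∘ e
     = cinv ∘ copair S (fmap H (ext F b s)) (tc_str T) ∘ e).
  { intro s. rewrite copair_map. unfold HMmap, HMobj. rewrite comp_id_r, <- (comp_assoc cinv), <- (fmap_comp H (sharp F b) (Mmap F s)).
    unfold sharp. rewrite ext_Mmap, comp_id_l.
    rewrite copair_comp, Hcinv1. reflexivity. }
  assert (Key : forall t0 : Hom (coprod S X (tc_carrier T)) (tc_carrier T), fmap H (ext F b t0) ∘ d =
     copair S (copair S (fmap H (ext F b (t0 ∘ @inl C S X (tc_carrier T))))
                 (fmap H (t0 ∘ @inr C S X (tc_carrier T)) ∘ (tc_str T)) ∘ e)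
               (fmap H (t0 ∘ @inr C S X (tc_carrier T)) ∘ (tc_str T))).
  { intro t0. unfold d. rewrite copair_comp, comp_assoc, copair_comp.
    rewrite <- fmap_comp, ext_Mmap, !comp_assoc, <- fmap_comp, comp_assoc, ext_eta.
    reflexivity. }
  destruct (core P H K F l Hl T b (proj1 Hb) (coprod S X (tc_carrier T)) d) as [t [Ht Hu]].
  assert (Tinr : t ∘ @inr C S X (tc_carrier T) = idm (tc_carrier T)).
  { transitivity (unfold T (tc_str T)).
    - apply unfold_unique. rewrite comp_assoc, Ht, Key, copair_inr.
      reflexivity.
    - symmetry. apply unfold_unique. rewrite comp_id_r, fmap_id, comp_id_l. reflexivity. }
  exists (t ∘ @inl C S X (tc_carrier T)). split.
  - rewrite R. transitivity (cinv ∘ (tc_str T) ∘ (t ∘ @inl C S X (tc_carrier T))).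
    + rewrite Hcinv1, comp_id_l. reflexivity.
    + rewrite <- !comp_assoc. f_equal.
      rewrite comp_assoc, Ht, Key, copair_inl, Tinr, fmap_id, comp_id_l.
      reflexivity.
  - intros t' Ht'. rewrite R in Ht'.
    assert (Ct : (tc_str T) ∘ t' = copair S (fmap H (ext F b t')) (tc_str T) ∘ e).
    { rewrite Ht' at 1. rewrite !comp_assoc, Hcinv2, comp_id_l. reflexivity. }
    assert (ET : copair S t' (idm (tc_carrier T)) = t).
    { apply Hu. rewrite Key, copair_inl, copair_inr, fmap_id, comp_id_l, copair_comp, comp_id_r, Ct.
      reflexivity. }
    rewrite <- ET, copair_inl. reflexivity.
Qed.
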